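(* Let $D\mathcal{M}$ be an $\ell c$DCB system. Then every positive equilibrium $x^*\in\mathbb{R}^n_{>0}$ of $D\mathcal{M}$ (viewed as a constant function on $[-\tau,0]$) is Lyapunov stable for the delay differential equation of $D\mathcal{M}$ on $C([-\tau,0];\mathbb{R}^n_{>0})$ with the supremum norm.
   Context: For $x,y\in\mathbb{R}^n$ with $x\ge 0$, write $x^{y}=\prod_{j=1}^n x_j^{y_j}$. A delayed mass-action system on species $X_1,\dots,X_n$ consists of reactions $R_i: y_{\cdot i}\to y'_{\cdot i}$, $i=1,\dots,r$, with complexes $y_{\cdot i},y'_{\cdot i}\in\mathbb{R}^n_{\ge0}$, rate constants $\kappa_i>0$ and delays $\tau_i\ge0$; with $\tau\ge\max_i\tau_i$, its dynamics is the delay differential equation $\dot x(t)=F(x_t):=\sum_{i=1}^r\kappa_i\big[x(t-\tau_i)^{y_{\cdot i}}y'_{\cdot i}-x(t)^{y_{\cdot i}}y_{\cdot i}\big]$, $t\ge 0$, where $x_t(s)=x(t+s)$, $s\in[-\tau,0]$, with initial function $\theta\in C([-\tau,0];\mathbb{R}^n_{\ge0})$. A positive equilibrium is $x^*\in\mathbb{R}^n_{>0}$ with $\sum_i\kappa_i (x^* )^{y_{\cdot i}}(y'_{\cdot i}-y_{\cdot i})=0$. A vector $\bar x\in\mathbb{R}^n_{>0}$ is a complex balanced equilibrium if for every complex $\eta$ of the network $\sum_{i: y_{\cdot i}=\eta}\kappa_i\bar x^{y_{\cdot i}}=\sum_{i: y'_{\cdot i}=\eta}\kappa_i\bar x^{y_{\cdot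 i}}$. A delayed complex balanced (DCB) system is a delayed mass-action system admitting a positive complex balanced equilibrium. Two delayed mass-action systems $D\mathcal{M}$ (right-hand side $F$) and $D\tilde{\mathcal{M}}$ (right-hand side $\tilde F$) on the same species are linearly conjugate via a positive diagonal matrix $Q$ if $F(Q\psi)=Q\tilde F(\psi)$ for all $\psi\in C([-\tau,0];\mathbb{R}^n_{>0})$, i.e. $x(t)=Q\tilde x(t)$ maps solutions of $D\tilde{\mathcal{M}}$ to solutions of $D\mathcal{M}$. An $\ell c$DCB system is a delayed mass-action system that is linearly conjugate via some positive diagonal matrix to a DCB system. *)

(* Defs.v *)
From HB Require Import structures.
From mathcomp Require Import all_boot all_order all_algebra.
From mathcomp Require Import all_classical all_reals all_analysis.
Set Implicit Arguments. Unset Strict Implicit. Unset Printing Implicit Defensive.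
Import Order.TTheory GRing.Theory Num.Theory.
Import numFieldNormedType.Exports.
Local Open Scope classical_set_scope.
Local Open Scope ring_scope.

(* A delayed mass-action system on n species: reactions R_i : y_{.i} -> y'_{.i},
   i < nr, complexes stored as the columns of n x nr matrices. *)
Record dmas (R : realType) (n : nat) := DMAS {
  nr : nat;
  ycomp : 'M[R]_(n, nr);
  ycomp' : 'M[R]_(n, nr);
  kappa : 'I_nr -> R;
  delay : 'I_nr -> R
}.

Arguments kappa [R n] d _.
Arguments delay [R n] d _.

Section DMAS.
Variables (R : realType) (n : nat).

Definition valid_dmas (S : dmas R n) : Prop :=
  (forall j i, 0 <= ycomp S j i) /\ (forall j i, 0 <= ycomp' S j i) /\
  (forall i, 0 < kappa S i) /\ (forall i, 0 <= delay S i).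

(* x^y = prod_j x_j^{y_j} (real powers, with 0^0 = 1) *)
Definition mono (x : 'I_n -> R) (y : 'cV[R]_n) : R :=
  \prod_(j < n) powR (x j) (y j ord0).

(* F(psi) = sum_i kappa_i [ psi(-tau_i)^{y_i} y'_i - psi(0)^{y_i} y_i ],
   psi a function on [-tau,0] (represented on R). *)
Definition Fdelay (S : dmas R n) (psi : R -> 'I_n -> R) : 'I_n -> R :=
  fun k => \sum_(i < nr S) kappa S i *
     (mono (psi (- delay S i)) (col i (ycomp S)) * ycomp' S k i
      - mono (psi 0) (col i (ycomp S)) * ycomp S k i).

Definition positive_equilibrium (S : dmas R n) (xs : 'I_n -> R) : Prop :=
  (forall k, 0 < xs k) /\
  (forall k, \sum_(i < nr S) kappa S i * mono xs (col i (ycomp S)) *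
               (ycomp' S k i - ycomp S k i) = 0).

(* complex balance at xb: for every complex eta (vectors that are not complexes
   of the network give two empty sums, so quantifying over all eta is the same) *)
Definition complex_balanced (S : dmas R n) (xb : 'I_n -> R) : Prop :=
  (forall k, 0 < xb k) /\
  forall eta : 'cV[R]_n,
    \sum_(i < nr S | col i (ycomp S) == eta) kappa S i * mono xb (col i (ycomp S))
    = \sum_(i < nr S | col i (ycomp' S) == eta) kappa S i * mono xb (col i (ycomp S)).

Definition DCB (S : dmas R n) : Prop :=
  valid_dmas S /\ exists xb, complex_balanced S xb.

Definition pos_cont_init (tau : R) (psi : R -> 'I_n -> R) : Prop :=
  (forall s, -tau <= s <= 0 -> forall k, 0 < psi s k) /\
  (forall k, {within `[-tau, 0], continuous (fun s => psi s k)}).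

Definition lin_conj (tau : R) (S S' : dmas R n) (q : 'I_n -> R) : Prop :=
  (forall k, 0 < q k) /\
  forall psi, pos_cont_init tau psi ->
    forall k, Fdelay S (fun s j => q j * psi s j) k = q k * Fdelay S' psi k.

Definition lcDCB (tau : R) (S : dmas R n) : Prop :=
  valid_dmas S /\
  exists (S' : dmas R n) (q : 'I_n -> R),
    (forall i, delay S' i <= tau) /\ DCB S' /\ lin_conj tau S S' q.

Definition is_solution (S : dmas R n) (tau : R) (theta : R -> 'I_n -> R)
    (T : R) (x : R -> 'I_n -> R) : Prop :=
  (forall s, -tau <= s <= 0 -> x s = theta s) /\
  (forall k, {within `[-tau, T[, continuous (fun t => x t k)}) /\
  (forall t, 0 < t < T -> forall k,
     is_derive t 1 (fun u => x u k) (Fdelay S (fun s => x (t + s)) k)).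

(* Lyapunov stability of the constant function xs in C([-tau,0]; R^n_{>0})
   with the supremum norm (max norm on R^n): for every eps > 0 there is
   delta > 0 such that every solution starting within delta of xs stays
   within eps of xs, for as long as it is defined. *)
Definition lyapunov_stable (S : dmas R n) (tau : R) (xs : 'I_n -> R) : Prop :=
  forall eps : R, 0 < eps -> exists2 delta : R, 0 < delta &
    forall theta, pos_cont_init tau theta ->
      (forall s, -tau <= s <= 0 -> forall k, `|theta s k - xs k| < delta) ->
      forall (T : R) (x : R -> 'I_n -> R), 0 < T -> is_solution S tau theta T x ->
        forall t, 0 <= t < T -> forall s, -tau <= s <= 0 ->
          forall k, `|x (t + s) k - xs k| < eps.

End DMAS.

(* Main.v *)
Require Import Defs.
From HB Require Import structures.
From mathcomp Require Import all_boot all_order all_algebra.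
From mathcomp Require Import all_classical all_reals all_analysis.
From mathcomp Require Import ring lra.
Import Order.TTheory GRing.Theory Num.Theory.
Import numFieldNormedType.Exports.
Local Open Scope classical_set_scope.
Local Open Scope ring_scope.
Set Implicit Arguments. Unset Strict Implicit.

Section Helpers.
Variable R : realType.

Lemma wcont_ed (f : R -> R) (A : set R) x : {within A, continuous f} -> A x ->
  forall e, 0 < e -> exists2 d, 0 < d &
    forall y, A y -> `|y - x| < d -> `|f y - f x| < e.
Proof.
move=> /subspace_continuousP /(_ x) cf Ax e e0.
have := cf Ax; move/cvgrPdist_lt => /(_ e e0).
rewrite near_withinE => /nbhs_ballP[d d0 H].
exists d => // y Ay yx; rewrite distrC; apply: H => //.
by rewrite /ball /= distrC.
Qed.

Lemma ed_wcont (f : R -> R) (A : set R) :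
  (forall x, A x -> forall e, 0 < e -> exists2 d, 0 < d &
    forall y, A y -> `|y - x| < d -> `|f y - f x| < e) ->
  {within A, continuous f}.
Proof.
move=> H; apply/subspace_continuousP => x Ax.
apply/cvgrPdist_lt => e e0; have [d d0 Hd] := H x Ax e e0.
rewrite near_withinE; apply/nbhs_ballP; exists d => // y /= yx Ay.
rewrite distrC; apply: Hd => //; by rewrite distrC.
Qed.

Lemma cont_ed (f : R -> R) x : {for x, continuous f} ->
  forall e, 0 < e -> exists2 d, 0 < d &
    forall y, `|y - x| < d -> `|f y - f x| < e.
Proof.
move=> cf e e0; have := cf; move/cvgrPdist_lt => /(_ e e0).
move=> /nbhs_ballP[d d0 H].
exists d => // y yx; rewrite distrC; apply: H => //.
by rewrite /ball /= distrC.
Qed.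

Lemma exists_small (m : nat) (f : 'I_m -> R) : (forall i, 0 < f i) ->
  exists2 e, 0 < e & forall i, e <= f i.
Proof.
move=> fp; exists (1 / (1 + \sum_i (f i)^-1)).
  by rewrite divr_gt0 // ltr_pwDl // sumr_ge0 // => i _; rewrite invr_ge0 ltW.
move=> i; rewrite ler_pdivrMr; last first.
  by rewrite ltr_pwDl // sumr_ge0 // => j _; rewrite invr_ge0 ltW.
rewrite -[X in X <= _](divff (lt0r_neq0 (fp i))) ler_pM2l //.
rewrite (bigD1 i) //= addrCA ler_wpDr //.
by rewrite addr_ge0 // sumr_ge0 // => j _; rewrite invr_ge0 ltW.
Qed.

Lemma expR_split (a b : R) : expR b = expR a * expR (b - a).
Proof. by rewrite -expRD addrC subrK. Qed.

Lemma E1 (a b : R) : expR a * (b - a) <= expR b - expR a.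
Proof.
have := expR_ge1Dx (b - a); rewrite -(ler_pM2l (expR_gt0 a)) -expR_split.
by rewrite mulrDr mulr1 lerBrDl addrC.
Qed.

Lemma E1s (a b : R) : a != b -> expR a * (b - a) < expR b - expR a.
Proof.
move=> ab; have := @expR_gt1Dx R (b - a); rewrite subr_eq0 eq_sym => /(_ ab).
rewrite -(ltr_pM2l (expR_gt0 a)) -expR_split.
by rewrite mulrDr mulr1 ltrBrDl addrC.
Qed.

End Helpers.

Section Alg.
Variables (R : realType) (n : nat).

Definition dotv (y : 'cV[R]_n) (v : 'I_n -> R) := \sum_j y j ord0 * v j.

Lemma mono_exp (z : 'I_n -> R) y : (forall j, 0 < z j) ->
  mono z y = expR (dotv y (fun j => ln (z j))).
Proof.
move=> zp; rewrite /mono /dotv expR_sum; apply: eq_bigr => j _.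
by rewrite /powR gt_eqF.
Qed.

Lemma sum_seq_pred1 (T : eqType) (s : seq T) (v : T) (F : T -> R) :
  uniq s -> v \in s -> \sum_(eta <- s | eta == v) F eta = F v.
Proof.
move=> us vs; rewrite -big_filter.
have -> : [seq eta <- s | eta == v] = [:: v].
  by rewrite -(filter_pred1_uniq us vs); apply: eq_filter => x.
by rewrite big_seq1.
Qed.

Lemma sum_partition (m : nat) (s : seq 'cV[R]_n) (Z : 'M[R]_(n, m))
   (w : 'I_m -> R) (phi : 'cV[R]_n -> R) :
  uniq s -> (forall i, col i Z \in s) ->
  \sum_i w i * phi (col i Z) =
  \sum_(eta <- s) phi eta * \sum_(i | col i Z == eta) w i.
Proof.
move=> us Zs.
transitivity (\sum_i \sum_(eta <- s | eta == col i Z) w i * phi eta).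
  by apply: eq_bigr => i _; rewrite sum_seq_pred1.
under eq_bigr do rewrite big_mkcond /=.
rewrite exchange_big /=; apply: eq_bigr => eta _.
rewrite mulr_sumr [RHS]big_mkcond /=; apply: eq_bigr => i _.
rewrite eq_sym; case: eqP => [<-|]; by rewrite ?mulr0 // mulrC.
Qed.

Definition CBid (S : dmas R n) (c : 'I_n -> R) : Prop :=
  forall phi : 'cV[R]_n -> R,
    \sum_i kappa S i * mono c (col i (ycomp S)) * phi (col i (ycomp' S)) =
    \sum_i kappa S i * mono c (col i (ycomp S)) * phi (col i (ycomp S)).

Lemma cb_CBid (S : dmas R n) xb : complex_balanced S xb -> CBid S xb.
Proof.
move=> [_ cb] phi.
pose s := undup ([seq col i (ycomp S) | i <- enum 'I_(nr S)] ++
                 [seq col i (ycomp' S) | i <- enum 'I_(nr S)]).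
have us : uniq s by rewrite undup_uniq.
have sY : forall i, col i (ycomp S) \in s.
  by move=> i; rewrite mem_undup mem_cat; apply/orP; left; apply: map_f; rewrite mem_enum.
have sY' : forall i, col i (ycomp' S) \in s.
  by move=> i; rewrite mem_undup mem_cat; apply/orP; right; apply: map_f; rewrite mem_enum.
pose w i := kappa S i * mono xb (col i (ycomp S)).
have := sum_partition w phi us sY'; rewrite /w => ->.
have := sum_partition w phi us sY; rewrite /w => ->.
by apply: eq_bigr => eta _; rewrite cb.
Qed.


Lemma dotvD y (u v : 'I_n -> R) :
  dotv y (fun j => u j + v j) = dotv y u + dotv y v.
Proof. by rewrite /dotv -big_split; apply: eq_bigr => j _; rewrite mulrDr. Qed.

Lemma mono_shift (xb c : 'I_n -> R) y : (forall j, 0 < xb j) -> (forall j, 0 < c j) ->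
  mono c y = mono xb y * expR (dotv y (fun j => ln (c j) - ln (xb j))).
Proof.
move=> xp cp; rewrite !mono_exp // -expRD -dotvD; congr (expR _).
by apply: eq_bigr => j _; rewrite addrC subrK.
Qed.

Lemma HJ (S : dmas R n) xb c : (forall i, 0 < kappa S i) ->
  complex_balanced S xb -> (forall j, 0 < c j) ->
  (forall k, \sum_i kappa S i * mono c (col i (ycomp S)) *
               (ycomp' S k i - ycomp S k i) = 0) ->
  CBid S c.
Proof.
move=> kp cbx cp eqc.
have CBx := cb_CBid cbx.
have xp := cbx.1.
pose v j := ln (c j) - ln (xb j).
pose W i := kappa S i * mono xb (col i (ycomp S)).
pose a i := dotv (col i (ycomp S)) v.
pose b i := dotv (col i (ycomp' S)) v.
have Wp i : 0 < W i by rewrite /W mulr_gt0 // mono_exp // expR_gt0.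
have monoc i : kappa S i * mono c (col i (ycomp S)) = W i * expR (a i).
  by rewrite /W (mono_shift _ xp cp) mulrA.
have eq1 : \sum_i W i * expR (a i) * (b i - a i) = 0.
  transitivity (\sum_k v k * \sum_i kappa S i * mono c (col i (ycomp S)) *
               (ycomp' S k i - ycomp S k i)); last first.
    by rewrite big1 // => k _; rewrite eqc mulr0.
  under [RHS]eq_bigr do rewrite mulr_sumr.
  rewrite exchange_big /=; apply: eq_bigr => i _.
  rewrite -monoc /a /b /dotv -sumrB mulr_sumr; apply: eq_bigr => k _.
  by rewrite !mxE -mulrBl; ring.
have eq2 := CBx (fun eta => expR (dotv eta v)).
rewrite -/W in eq2.
have eq3 : \sum_i W i * (expR (b i) - expR (a i) - expR (a i) * (b i - a i)) = 0.
  under eq_bigr do rewrite mulrBr mulrBr mulrA.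
  rewrite !sumrB eq1 subr0.
  have -> : \sum_i W i * expR (b i) = \sum_i W i * expR (a i).
    by rewrite /W /a /b; exact: eq2.
  by rewrite subrr.
have ab i : a i = b i.
  apply/eqP; apply/negPn/negP => /E1s abi.
  have nn : forall j, true -> 0 <= W j * (expR (b j) - expR (a j) - expR (a j) * (b j - a j)).
    by move=> j _; apply: mulr_ge0; [exact: ltW|rewrite subr_ge0; exact: E1].
  have := psumr_eq0P nn eq3 (i:=i) isT.
  move/eqP; rewrite mulf_eq0 gt_eqF //= subr_eq0 => /eqP H.
  by move: abi; rewrite H ltxx.
move=> phi.
under eq_bigr do rewrite monoc ab.
under [RHS]eq_bigr do rewrite monoc.
have := CBx (fun eta => expR (dotv eta v) * phi eta); rewrite -/W /=.
under eq_bigr do rewrite mulrA.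
under [in RHS]eq_bigr do rewrite mulrA.
by rewrite /a /b.
Qed.


Definition phiL (l L : R) := expR L * (L - l - 1) + expR l.

Lemma phiL_ge0 l L : 0 <= phiL l L.
Proof.
rewrite /phiL; have := E1 L l.
by rewrite mulrBr mulrBr mulr1 -subr_ge0 => H; rewrite -subr_ge0 subr0; lra.
Qed.

Lemma key_ineq (S : dmas R n) (c : 'I_n -> R) (l0 : 'I_n -> R) (L1 : 'I_(nr S) -> R) :
  (forall i, 0 < kappa S i) -> (forall j, 0 < c j) -> CBid S c ->
  \sum_k (l0 k - ln (c k)) * (\sum_i kappa S i *
        (expR (L1 i) * ycomp' S k i - expR (dotv (col i (ycomp S)) l0) * ycomp S k i))
  + \sum_i kappa S i * (phiL (dotv (col i (ycomp S)) (fun j => ln (c j))) (dotv (col i (ycomp S)) l0)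
                       - phiL (dotv (col i (ycomp S)) (fun j => ln (c j))) (L1 i)) <= 0.
Proof.
move=> kp cp CB; set lc := (fun j => ln (c j)).
have lcE k : ln (c k) = lc k by [].
under eq_bigr do rewrite lcE.
pose Lam j := l0 j - lc j.
pose ell i := dotv (col i (ycomp S)) lc.
pose L0 i := dotv (col i (ycomp S)) l0.
pose bet i := dotv (col i (ycomp S)) Lam.
pose bet' i := dotv (col i (ycomp' S)) Lam.
have L0E i : L0 i = ell i + bet i.
  by rewrite /L0 /ell /bet -dotvD; apply: eq_bigr => j _; rewrite /Lam addrC subrK.
have -> : \sum_k (l0 k - lc k) * (\sum_i kappa S i *
        (expR (L1 i) * ycomp' S k i - expR (dotv (col i (ycomp S)) l0) * ycomp S k i))
   = \sum_i kappa S i * (expR (L1 i) * bet' i - expR (L0 i) * bet i).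
  under eq_bigr do rewrite mulr_sumr.
  rewrite exchange_big /=; apply: eq_bigr => i _.
  rewrite /bet /bet' /dotv mulr_sumr mulr_sumr -sumrB mulr_sumr.
  by apply: eq_bigr => k _; rewrite !mxE /Lam /L0; ring.
rewrite -big_split /=.
apply: (@le_trans _ _ (\sum_i kappa S i * expR (ell i) *
          (expR (bet' i) - expR (bet i)))).
  apply: ler_sum => i _.
  rewrite -mulrDr -mulrA ler_pM2l //.
  have E := E1 (L1 i - ell i) (bet' i).
  rewrite -(ler_pM2l (expR_gt0 (ell i))) in E.
  rewrite /phiL -/(ell i) -/(L0 i) L0E expRD.
  have -> : expR (L1 i) = expR (ell i) * expR (L1 i - ell i) by rewrite -expRD addrC subrK.
  move: E; set A := expR (L1 i - ell i); set C := expR (ell i); set B := expR (bet i).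
  set b' := bet' i; set a := L1 i - ell i; set b := bet i.
  move=> E; nra.
have -> : \sum_i kappa S i * expR (ell i) * (expR (bet' i) - expR (bet i)) =
  \sum_i kappa S i * mono c (col i (ycomp S)) * expR (dotv (col i (ycomp' S)) Lam) -
  \sum_i kappa S i * mono c (col i (ycomp S)) * expR (dotv (col i (ycomp S)) Lam).
  rewrite -sumrB; apply: eq_bigr => i _; rewrite (mono_exp _ cp) -/lc -/(ell i).
  by rewrite mulrBr.
by rewrite (CB (fun eta => expR (dotv eta Lam))) subrr.
Qed.

End Alg.

Section Anal.
Variable R : realType.

Lemma wcont_sum (A : set R) (m : nat) (F : 'I_m -> R -> R) :
  (forall i, {within A, continuous (F i)}) ->
  {within A, continuous (fun t => \sum_i F i t)}.
Proof.
move=> cF; rewrite -fct_sumE.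
apply: (big_ind (fun f : R -> R => {within A, continuous f})) => //.
- by apply: continuous_subspaceT => x; exact: cst_continuous.
- by move=> f g cf cg; exact: within_continuousD.
Qed.

Lemma wcont_pt (A : set R) (f : R -> R) :
  (forall x, A x -> {for x, continuous f}) -> {within A, continuous f}.
Proof.
move=> H; rewrite continuous_subspace_in => x /set_mem Ax.
exact: (continuous_subspaceT_for Ax (H x Ax)).
Qed.

Lemma is_derive_shiftB (G : R -> R) (d t g : R) :
  is_derive (t - d) 1 G g -> is_derive t 1 (fun u => G (u - d)) g.
Proof.
move=> H.
have Hs : is_derive t 1 (fun u : R => u - d) 1.
  have := is_deriveD (is_derive_id t (1:R)) (is_derive_cst (- d) t 1).
  by rewrite addr0.
have := @is_derive1_comp R G (fun u : R => u - d) t g 1 H Hs; rewrite mulr1.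
by [].
Qed.

Definition hf (c z : R) := z * (ln z - ln c) - z + c.

Lemma is_derive_hf (c z : R) : 0 < z -> is_derive z 1 (hf c) (ln z - ln c).
Proof.
move=> zp.
have H1 := is_derive_id z (1:R).
have H2 := is_derive1_ln zp.
have H3 := is_deriveB H2 (is_derive_cst (ln c) z 1).
have H4 := is_deriveM H1 H3.
have H5 := is_deriveD (is_deriveB H4 H1) (is_derive_cst c z 1).
move: H5; set D := (X in is_derive _ _ _ X) => H5.
have -> : ln z - ln c = D.
  rewrite /D /= subr0 addr0 /GRing.scale /= mulr1.
  by rewrite mulfV ?gt_eqF // [1 + _]addrC addrK.
exact: H5.
Qed.

Lemma hf_cont (c z : R) : 0 < z -> {for z, continuous (hf c)}.
Proof.
move=> zp; have H0 := is_derive_hf c zp.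
have H : derivable (hf c) z 1 by exact: ex_derive.
by apply/differentiable_continuous; rewrite -derivable1_diffP.
Qed.

Lemma hf_ge0 (c z : R) : 0 < c -> 0 < z -> 0 <= hf c z.
Proof.
move=> cp zp; have := E1 (ln z) (ln c).
by rewrite !lnK ?posrE // /hf => H; lra.
Qed.

Lemma hf_gt0 (c z : R) : 0 < c -> 0 < z -> z != c -> 0 < hf c z.
Proof.
move=> cp zp zc; have : ln z != ln c.
  by apply: contra zc => /eqP H; apply/eqP; apply: (ln_inj _ _ H); rewrite ?posrE.
move=> /E1s; by rewrite !lnK ?posrE // /hf => H; lra.
Qed.

Lemma hf_tangent (c z w : R) : 0 < c -> 0 < z -> 0 < w ->
  hf c w + (ln w - ln c) * (z - w) <= hf c z.
Proof.
move=> cp zp wp; have := E1 (ln z) (ln w).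
by rewrite !lnK ?posrE // /hf => H; nra.
Qed.

End Anal.

Section FTC.
Variable R : realType.
Notation mu := (@lebesgue_measure R).

Lemma wcont_restrict (f : R -> R) (a b : R) : (a < b)%R ->
  {within `[a, b], continuous f} -> {in `]a, b[, continuous (f \_ `[a, b])}.
Proof.
move=> ab + x xab; move=> /(_ x).
rewrite {1}/continuous_at => xf.
rewrite /prop_for /continuous_at  patchE.
rewrite mem_set ?mulr1 /=; last exact: subset_itv_oo_cc.
exact: cvg_patch.
Qed.

Lemma antideriv (g : R -> R) (a b : R) : a < b -> {within `[a, b], continuous g} ->
  exists G : R -> R, (forall t, a <= t <= b -> {for t, continuous G}) /\
     (forall t, a < t < b -> is_derive t 1 G (g t)).
Proof.
move=> ab cg.
pose a0 := a - 1; pose b1 := b + 1.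
pose fab := g \_ `[a, b].
have a0a : a0 < a by rewrite /a0 ltrBlDr ltrDl.
have bb1 : b < b1 by rewrite /b1 ltrDl.
have ig : mu.-integrable `[a, b] (EFin \o g).
  by apply: continuous_compact_integrable => //; exact: segment_compact.
have ifab : mu.-integrable `[a0, b1] (EFin \o fab).
  rewrite -restrict_EFin; apply/integrable_restrict => //=.
  rewrite setIidr //; apply: subset_itvScc; rewrite bnd_simp ltW //.
pose G x := (\int[mu]_(t in `[a0, x]) fab t)%R.
exists G; split.
- move=> t /andP[ta tb].
  have cG := parameterized_integral_continuous (ltW (lt_trans a0a (lt_le_trans ab (ltW bb1)))) ifab.
  apply: (within_continuous_continuous _ cG).
    exact: (lt_trans a0a (lt_le_trans ab (ltW bb1))).
  rewrite in_itv /=; apply/andP; split.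
    exact: lt_le_trans a0a ta.
  exact: le_lt_trans tb bb1.
- move=> t /andP[ta tb].
  have cfab : {for t, continuous fab}.
    by apply: wcont_restrict => //; rewrite in_itv /= ta tb.
  have [dG G'] := continuous_FTC1_closed (lt_trans tb bb1) ifab (lt_trans a0a ta) cfab.
  have -> : g t = fab t.
    by rewrite /fab patchE mem_set //= in_itv /= !ltW.
  rewrite -G'; rewrite derive1E; exact: derivableP.
Qed.

End FTC.

Section Core.
Variables (R : realType) (n : nat).

Lemma cont_of_der (f : R -> R) (z df : R) : is_derive z 1 f df -> {for z, continuous f}.
Proof.
move=> H0; have H : derivable f z 1 by exact: ex_derive.
by apply/differentiable_continuous; rewrite -derivable1_diffP.
Qed.

Lemma phiL_cont (l L : R) : {for L, continuous (phiL l)}.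
Proof.
have H1 := is_derive_expR L.
have H2 := is_deriveB (is_derive_id L (1:R)) (is_derive_cst (l + 1) L 1).
have H3 := is_deriveD (is_deriveM H1 H2) (is_derive_cst (expR l) L 1).
have H4 := cont_of_der H3.
move=> U; rewrite /phiL; move: (H4 U) => /=.
by rewrite /= opprD addrA.
Qed.

Lemma scale_ln_cont (k z : R) : 0 < z -> {for z, continuous (fun z => k * ln z)}.
Proof.
move=> zp; have H := is_deriveZ k (is_derive1_ln zp).
exact: (cont_of_der H).
Qed.

Lemma shift_cont (d t : R) : {for t, continuous (fun u : R => u - d)}.
Proof.
have := is_deriveD (is_derive_id t (1:R)) (is_derive_cst (- d) t 1).
exact: cont_of_der.
Qed.


Lemma wcont_lnx (A : set R) (f : R -> R) (k : R) :
  {within A, continuous f} -> (forall u, A u -> 0 < f u) ->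
  {within A, continuous (fun u => k * ln (f u))}.
Proof.
move=> cf fp.
have -> : (fun u => k * ln (f u)) = (fun z => k * ln z) \o f by [].
apply: within_continuous_comp => //.
by move=> z /set_mem [u Au <-]; apply: scale_ln_cont; exact: fp.
Qed.

Lemma core (P : dmas R n) (tau : R) (c : 'I_n -> R) (xt : R -> 'I_n -> R) (b M : R) :
  (forall i, 0 < kappa P i) -> (forall i, 0 <= delay P i) ->
  (forall i, delay P i <= tau) -> 0 <= tau ->
  (forall j, 0 < c j) -> CBid P c -> 0 < b ->
  (forall u, -tau <= u <= b -> forall k, 0 < xt u k) ->
  (forall k, {within `[-tau, b], continuous (fun u => xt u k)}) ->
  (forall t, 0 < t < b -> forall k,
     is_derive t 1 (fun u => xt u k) (Fdelay P (fun s => xt (t + s)) k)) ->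
  (forall i u, -tau <= u <= 0 ->
     phiL (dotv (col i (ycomp P)) (fun j => ln (c j)))
          (dotv (col i (ycomp P)) (fun j => ln (xt u j))) <= M) ->
  \sum_k hf (c k) (xt b k) <=
    \sum_k hf (c k) (xt 0 k) + \sum_i kappa P i * delay P i * M.
Proof.
move=> kp dp dtau tau0 cp CB b0 xpos xcont xder Mb.
pose ell i := dotv (col i (ycomp P)) (fun j => ln (c j)).
pose gi i u := kappa P i *
  phiL (ell i) (dotv (col i (ycomp P)) (fun j => ln (xt u j))).
have ab : -tau < b by rewrite (le_lt_trans _ b0) // oppr_le0.
have gcont i : {within `[-tau, b], continuous (gi i)}.
  have cL : {within `[-tau, b], continuous
       (fun u => dotv (col i (ycomp P)) (fun j => ln (xt u j)))}.
    apply: wcont_sum => j; apply: wcont_lnx => // u.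
    by rewrite /= in_itv /= => /andP[u1 u2]; apply: xpos; rewrite u1 u2.
  have -> : gi i = (fun z => kappa P i * phiL (ell i) z) \o
              (fun u => dotv (col i (ycomp P)) (fun j => ln (xt u j))) by [].
  apply: within_continuous_comp => // z _.
  by apply: continuousM; [exact: cst_continuous|exact: phiL_cont].
have [G HG] := boolp.choice (fun i => antideriv ab (gcont i)).
pose V t := \sum_k hf (c k) (xt t k) + \sum_i (G i t - G i (t - delay P i)).
pose dV t := \sum_k (ln (xt t k) - ln (c k)) * Fdelay P (fun s => xt (t + s)) k
            + \sum_i (gi i t - gi i (t - delay P i)).
have Vder : forall t, t \in `]0, b[ -> is_derive t 1 V (dV t).
  move=> t; rewrite in_itv /= => ttb; have /andP[t0 tb] := ttb.
  have tin : -tau < t < b by apply/andP; split; lra.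
  have tdin i : -tau < t - delay P i < b.
    by apply/andP; split; have := dtau i; have := dp i; lra.
  have H1 : is_derive t 1 (\sum_k (fun u => hf (c k) (xt u k)))
      (\sum_k (ln (xt t k) - ln (c k)) * Fdelay P (fun s => xt (t + s)) k).
    apply: (@is_derive_sum _ _ _ n (fun k u => hf (c k) (xt u k))) => k.
    have xtp : 0 < xt t k by apply: xpos; apply/andP; split; lra.
    exact: (is_derive1_comp (is_derive_hf (c k) xtp) (xder t ttb k)).
  have H2 : is_derive t 1 (\sum_i (fun u => G i u - G i (u - delay P i)))
      (\sum_i (gi i t - gi i (t - delay P i))).
    apply: (@is_derive_sum _ _ _ (nr P) (fun i u => G i u - G i (u - delay P i))) => i.
    have E1' := (HG i).2 t tin.
    have E2' := is_derive_shiftB ((HG i).2 _ (tdin i)).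
    exact: (is_deriveB E1' E2').
  have H := is_deriveD H1 H2.
  rewrite !fct_sumE in H.
  exact: H.
have dVle : forall t, t \in `]0, b[ -> dV t <= 0.
  move=> t; rewrite in_itv /= => /andP[t0 tb].
  have xtp : forall k, 0 < xt t k by apply: xpos; apply/andP; split; lra.
  have xtdp : forall i k, 0 < xt (t - delay P i) k.
    by move=> i; apply: xpos; apply/andP; split; have := dtau i; have := dp i; lra.
  have := key_ineq (fun j => ln (xt t j))
     (fun i => dotv (col i (ycomp P)) (fun j => ln (xt (t - delay P i) j))) kp cp CB.
  suff -> : dV t = \sum_k (ln (xt t k) - ln (c k)) *
     (\sum_i kappa P i *
        (expR (dotv (col i (ycomp P)) (fun j => ln (xt (t - delay P i) j))) * ycomp' P k i
         - expR (dotv (col i (ycomp P)) (fun j => ln (xt t j))) * ycomp P k i))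
   + \sum_i kappa P i * (phiL (dotv (col i (ycomp P)) (fun j => ln (c j)))
                         (dotv (col i (ycomp P)) (fun j => ln (xt t j)))
       - phiL (dotv (col i (ycomp P)) (fun j => ln (c j)))
              (dotv (col i (ycomp P)) (fun j => ln (xt (t - delay P i) j)))) by [].
  rewrite /dV; congr (_ + _).
    apply: eq_bigr => k _; congr (_ * _); rewrite /Fdelay; apply: eq_bigr => i _.
    by rewrite addr0 !mono_exp.
  by apply: eq_bigr => i _; rewrite /gi mulrBr.
have Vcont : {within `[0, b], continuous V}.
  apply: within_continuousD.
    apply: wcont_sum => k.
    have -> : (fun t => hf (c k) (xt t k)) = hf (c k) \o (fun t => xt t k) by [].
    apply: within_continuous_comp.
      move=> z /set_mem [u]; rewrite /= in_itv /= => /andP[u0 ub] <-.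
      by apply: hf_cont; apply: xpos; apply/andP; split; lra.
    apply: continuous_subspaceW (xcont k).
    by apply: subset_itvScc; rewrite bnd_simp // oppr_le0.
  apply: wcont_sum => i; apply: wcont_pt => t; rewrite /= in_itv /= => /andP[t0 tb].
  apply: continuousB.
    by apply: (HG i).1; apply/andP; split; lra.
  have -> : (fun u => G i (u - delay P i)) = G i \o (fun u => u - delay P i) by [].
  apply: continuous_comp; first exact: shift_cont.
  by apply: (HG i).1; apply/andP; split; have := dtau i; have := dp i; lra.
have VbV0 : V b <= V 0.
  have [xi xiin] := MVT b0 Vder Vcont.
  rewrite subr0 => E; rewrite -subr_le0 E.
  by rewrite mulr_le0_ge0 ?dVle // ltW.
have Gmvt : forall i a, 0 <= a <= b -> exists2 xi, xi \in `[a - delay P i, a] &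
    G i a - G i (a - delay P i) = gi i xi * (a - (a - delay P i)).
  move=> i a /andP[a1 a2].
  have lb : a - delay P i <= a by rewrite lerBlDr lerDl.
  have dt := dtau i.
  have d1 : forall x, x \in `]a - delay P i, a[ -> is_derive x 1 (G i) (gi i x).
    move=> x; rewrite in_itv /= => /andP[x1 x2]; apply: (HG i).2.
    by apply/andP; split; lra.
  have d2 : {within `[a - delay P i, a], continuous (G i)}.
    apply: wcont_pt => x; rewrite /= in_itv /= => /andP[x1 x2]; apply: (HG i).1.
    by apply/andP; split; lra.
  exact: (MVT_segment lb d1 d2).
have Gpos : forall i, 0 <= G i b - G i (b - delay P i).
  move=> i; have [xi _ ->] := Gmvt i b (introT andP (conj (ltW b0) (lexx b))).
  rewrite mulr_ge0 //; last by rewrite opprB addrC subrK.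
  by rewrite /gi; apply: mulr_ge0; [exact: ltW | exact: phiL_ge0].
have Gle : forall i, G i 0 - G i (0 - delay P i) <= kappa P i * delay P i * M.
  move=> i; have [xi xiin ->] := Gmvt i 0 (introT andP (conj (lexx 0) (ltW b0))).
  rewrite !sub0r opprK /gi mulrAC; apply: ler_wpM2l.
    by apply: mulr_ge0; [exact: ltW|exact: dp].
  apply: Mb; move: xiin; rewrite in_itv /= => /andP[u1 u2].
  have dt := dtau i.
  by apply/andP; split; lra.
apply: (le_trans (y := V b)).
  by rewrite /V lerDl sumr_ge0 // => i _; exact: Gpos.
apply: (le_trans VbV0); rewrite /V lerD2l.
by apply: ler_sum => i _; exact: Gle.
Qed.


End Core.

Section Main.
Variables (R : realType) (n : nat).

Lemma cst_pci (tau : R) (c : 'I_n -> R) : (forall j, 0 < c j) ->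
  pos_cont_init tau (fun _ => c).
Proof.
move=> cp; split => // k.
by apply: continuous_subspaceT => x; exact: cst_continuous.
Qed.

Lemma eq_transfer (S P : dmas R n) (tau : R) (q xs : 'I_n -> R) :
  lin_conj tau S P q -> positive_equilibrium S xs ->
  forall k, \sum_i kappa P i * mono (fun j => xs j / q j) (col i (ycomp P)) *
               (ycomp' P k i - ycomp P k i) = 0.
Proof.
move=> [qp lc] [xp eqS] k.
have cp : forall j, 0 < xs j / q j by move=> j; rewrite divr_gt0.
have := lc _ (cst_pci tau cp) k.
have -> : (fun (_ : R) j => q j * (xs j / q j)) = (fun _ => xs).
  apply: funext => s; apply: funext => j; rewrite mulrC divfK //; exact: lt0r_neq0.
rewrite /Fdelay.
have -> : \sum_i kappa S i * (mono xs (col i (ycomp S)) * ycomp' S k i -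
                              mono xs (col i (ycomp S)) * ycomp S k i) = 0.
  by rewrite -[RHS](eqS k); apply: eq_bigr => i _; rewrite -mulrBr mulrA.
move/esym/eqP; rewrite mulf_eq0 (gt_eqF (qp k)) /= => /eqP H.
rewrite -[RHS]H.
by apply: eq_bigr => i _; ring.
Qed.


Lemma lower_bound (c q : 'I_n -> R) (e1 : R) : (forall k, 0 < c k) -> (forall k, 0 < q k) ->
  0 < e1 -> (forall k, e1 <= q k * c k / 2) ->
  exists2 al, 0 < al & forall k z, 0 < z -> e1 <= `|q k * z - q k * c k| ->
     al <= hf (c k) z.
Proof.
move=> cp qp e0 ec.
pose r k := e1 / q k.
have rp k : 0 < r k by rewrite divr_gt0.
have rc k : r k <= c k / 2.
  rewrite /r ler_pdivrMr //.
  have -> : c k / 2 * q k = q k * c k / 2 by ring.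
  exact: ec.
have cr k : 0 < c k - r k by have := rc k; have := cp k; lra.
pose m k := Num.min (hf (c k) (c k - r k)) (hf (c k) (c k + r k)).
have mp k : 0 < m k.
  rewrite /m lt_min; apply/andP; split; apply: hf_gt0 => //.
  - by rewrite lt_eqF // ltrBlDr ltrDl.
  - by rewrite addr_gt0.
  - by rewrite gt_eqF // ltrDl.
have [al alp alm] := exists_small mp.
exists al => // k z zp.
rewrite -mulrBr normrM (gtr0_norm (qp k)) -ler_pdivrMl // mulrC => zr.
apply: (le_trans (alm k)).
have [zc|zc] := lerP (c k) z.
- rewrite ger0_norm ?subr_ge0 // in zr.
  have wp : 0 < c k + r k by rewrite addr_gt0.
  apply: (le_trans (y := hf (c k) (c k + r k))).
    by rewrite /m ge_min lexx orbT.
  apply: (le_trans _ (hf_tangent (cp k) zp wp)).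
  rewrite lerDl mulr_ge0 // subr_ge0.
    by rewrite ler_ln ?posrE // lerDl ltW.
  by rewrite -/(r k) in zr; lra.
- rewrite ltr0_norm ?subr_lt0 // opprB in zr.
  apply: (le_trans (y := hf (c k) (c k - r k))).
    by rewrite /m ge_min lexx.
  apply: (le_trans _ (hf_tangent (cp k) zp (cr k))).
  rewrite lerDl mulr_le0 //.
    by rewrite subr_le0 ler_ln ?posrE // gerBl ltW.
  by rewrite -/(r k) in zr; rewrite subr_le0; lra.
Qed.


Lemma ex2_ex (T : Type) (P Q : T -> Prop) : (exists2 x, P x & Q x) -> exists x, P x /\ Q x.
Proof. by move=> [x px qx]; exists x. Qed.

Lemma min_pos (a b : R) : 0 < a -> 0 < b -> 0 < Num.min a b.
Proof. by move=> ha hb; rewrite lt_min ha hb. Qed.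

Lemma hf_cc (c : R) : hf c c = 0.
Proof. by rewrite /hf subrr mulr0 sub0r addrC subrr. Qed.

Lemma phiL_ll (l : R) : phiL l l = 0.
Proof. by rewrite /phiL subrr sub0r mulrN1 addrC subrr. Qed.

Lemma upper_bound (P : dmas R n) (c q : 'I_n -> R) (be : R) :
  (forall k, 0 < c k) -> (forall k, 0 < q k) -> 0 < be ->
  exists2 de, 0 < de & forall z : 'I_n -> R, (forall k, 0 < z k) ->
    (forall k, `|q k * z k - q k * c k| < de) ->
    (forall k, hf (c k) (z k) <= be) /\ (forall i, phiL (dotv (col i (ycomp P)) (fun j => ln (c j)))
                    (dotv (col i (ycomp P)) (fun j => ln (z j))) <= be).
Proof.
move=> cp qp bp.
have [d1 Hd1] := boolp.choice (fun k => ex2_ex (cont_ed (hf_cont (c:=c k) (cp k)) bp)).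
have d1p' k : 0 < d1 k by have [] := Hd1 k.
pose ell i := dotv (col i (ycomp P)) (fun j => ln (c j)).
have [eta Heta] := boolp.choice (fun i => ex2_ex (cont_ed (phiL_cont (l:=ell i) (L:=ell i)) bp)).
have etap i : 0 < eta i by have [] := Heta i.
pose SY i := \sum_j `|ycomp P j i|.
have SYp i : 0 <= SY i by rewrite sumr_ge0.
have [ze zep zele] := exists_small (fun i => divr_gt0 (etap i) (ltr_pwDl ltr01 (SYp i))).
have [rho Hrho] := boolp.choice (fun j => ex2_ex (cont_ed (continuous_ln (cp j)) zep)).
have rhop j : 0 < rho j by have [] := Hrho j.
have [de dep dele] := exists_small (fun k =>
  min_pos (mulr_gt0 (qp k) (d1p' k)) (mulr_gt0 (qp k) (rhop k))).
exists de => // z zp zc.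
have zb k : `|z k - c k| < d1 k /\ `|z k - c k| < rho k.
  have h := zc k; rewrite -mulrBr normrM gtr0_norm // in h.
  have := dele k; rewrite le_min => /andP[h1 h2].
  by split; rewrite -(ltr_pM2l (qp k)); apply: (lt_le_trans h).
split.
- move=> k; have [_ H] := Hd1 k; have := H (z k) (zb k).1.
  rewrite hf_cc subr0 => /ltW; exact: le_trans (ler_norm _).
- move=> i; have [_ H] := Heta i.
  suff hL : `|dotv (col i (ycomp P)) (fun j => ln (z j)) - ell i| < eta i.
    have := H _ hL; rewrite phiL_ll subr0 => /ltW; exact: le_trans (ler_norm _).
  have -> : dotv (col i (ycomp P)) (fun j => ln (z j)) - ell i =
      \sum_j (col i (ycomp P)) j ord0 * (ln (z j) - ln (c j)).
    by rewrite /ell /dotv -sumrB; apply: eq_bigr => j _; rewrite mulrBr.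
  apply: (le_lt_trans (ler_norm_sum _ _ _)).
  apply: (le_lt_trans (y := SY i * ze)).
    rewrite /SY mulr_suml; apply: ler_sum => j _.
    rewrite normrM mxE; apply: ler_wpM2l => //.
    have [_ Hr] := Hrho j; have := Hr (z j) (zb j).2.
    by rewrite distrC => /ltW.
  apply: (lt_le_trans (y := (1 + SY i) * ze)).
    by rewrite mulrDl mul1r ltrDr.
  by rewrite -ler_pdivlMl ?ltr_pwDl // mulrC; exact: zele.
Qed.

End Main.

Unset Implicit Arguments.
Theorem mainTheorem2 (R : realType) (n : nat) (S : dmas R n) (tau : R) :
  0 <= tau -> (forall i, delay S i <= tau) ->
  lcDCB tau S ->
  forall xs : 'I_n -> R, positive_equilibrium S xs ->
  lyapunov_stable S tau xs.
Proof.
move=> tau0 dS [vS [P [q [dP [[vP [xb cbx]] lcj]]]]] xs eqS eps eps0.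
have [_ [_ [kp dp]]] := vP.
have qp := lcj.1.
have xsp := eqS.1.
pose c j := xs j / q j.
have cp : forall j, 0 < c j by move=> j; rewrite divr_gt0.
have qc : forall k, q k * c k = xs k.
  by move=> k; rewrite /c mulrC divfK //; exact: lt0r_neq0.
have eqc := eq_transfer lcj eqS.
have CB : CBid P c := HJ kp cbx cp eqc.
have [e0 e0p e0le] := exists_small (fun k => divr_gt0 (xsp k) (@ltr0n R 2)).
pose e1 := Num.min eps e0.
have e1p : 0 < e1 by rewrite lt_min eps0 e0p.
have e1eps : e1 <= eps by rewrite /e1 ge_min lexx.
have e1xs : forall k, e1 <= xs k / 2.
  by move=> k; rewrite /e1 ge_min (e0le k) orbT.
have [al alp LB] := lower_bound cp qp e1p (fun k => (eq_ind _ (fun v => e1 <= v / 2) (e1xs k) _ (esym (qc k)))).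
pose K := n%:R + \sum_i kappa P i * delay P i.
have K0 : 0 <= K.
  by rewrite addr_ge0 // sumr_ge0 // => i _; rewrite mulr_ge0 // ltW.
pose be := al / (K + 1).
have bep : 0 < be by rewrite divr_gt0 // ltr_pwDr.
have [de0 de0p UB] := upper_bound P cp qp bep.
pose de := Num.min de0 e1.
have dep : 0 < de by rewrite lt_min de0p e1p.
have dee1 : de <= e1 by rewrite /de ge_min lexx orbT.
have dede0 : de <= de0 by rewrite /de ge_min lexx.
exists de => // theta [thp thc] thd T x T0 [xini [xcont xder]].
pose good u := forall k, `|x u k - xs k| < e1.
have good_pos : forall u k, good u -> xs k / 2 < x u k.
  move=> u k gu; have := gu k; have := e1xs k; have := xsp k.
  rewrite ltr_norml => h1 h2 /andP[h3 h4]; lra.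
have init_good : forall u, -tau <= u <= 0 -> forall k, `|x u k - xs k| < de.
  by move=> u hu k; rewrite xini //; exact: thd.
have KEY : forall s, 0 <= s < T -> (forall u, 0 <= u < s -> good u) -> good s.
  move=> s /andP[s0 sT] Hb.
  have [->|sn0] := eqVneq s 0.
    move=> k; apply: (lt_le_trans _ dee1); apply: init_good.
    by apply/andP; split; lra.
  have spos : 0 < s by rewrite lt_neqAle eq_sym sn0 s0.
  have posx : forall u, -tau <= u <= s -> forall k, 0 < x u k.
    move=> u /andP[u1 u2] k.
    have [u0|u0] := ltrP u 0.
      by rewrite xini; [apply: thp|]; apply/andP; split; lra.
    have [us|us] := ltrP u s.
      have := good_pos u k (Hb u (introT andP (conj u0 us))); have := xsp k; lra.
    have -> : u = s by apply/eqP; rewrite eq_le u2 us.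
    have sin' : `[-tau, T[%classic s by rewrite /= in_itv /=; apply/andP; split; lra.
    have [d dp' Hd] := wcont_ed (xcont k) sin' (divr_gt0 (xsp k) (@ltr0n R 2)).
    pose m := Num.min s d.
    have mp : 0 < m by rewrite lt_min spos dp'.
    have ms : m <= s by rewrite /m ge_min lexx.
    have md : m <= d by rewrite /m ge_min lexx orbT.
    pose y := s - m / 2.
    have y0 : 0 <= y < s by apply/andP; split; rewrite /y; lra.
    have yin : `[-tau, T[%classic y by rewrite /= in_itv /=; apply/andP; split; rewrite /y; lra.
    have ys : `|y - s| < d by rewrite /y addrC addKr normrN ger0_norm; lra.
    have := Hd y yin ys; have := good_pos y k (Hb y y0); have := xsp k.
    rewrite ltr_norml; lra.
  pose xt u k := x u k / q k.
  have xtp : forall u, -tau <= u <= s -> forall k, 0 < xt u k.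
    by move=> u hu k; rewrite divr_gt0 // posx.
  have qxt : forall u k, q k * xt u k = x u k.
    by move=> u k; rewrite /xt mulrC divfK //; exact: lt0r_neq0.
  have UBu : forall u, -tau <= u <= 0 ->
    (forall k, hf (c k) (xt u k) <= be) /\
    (forall i, phiL (dotv (col i (ycomp P)) (fun j => ln (c j)))
                    (dotv (col i (ycomp P)) (fun j => ln (xt u j))) <= be).
    move=> u hu; apply: UB.
      by move=> k; apply: xtp; case/andP: hu => h1 h2; apply/andP; split; lra.
    move=> k; rewrite qxt qc; apply: (lt_le_trans _ dede0); exact: init_good.
  have xtc : forall k, {within `[-tau, s], continuous (fun u => xt u k)}.
    move=> k.
    have -> : (fun u => xt u k) = (fun z => z / q k) \o (fun u => x u k) by [].
    apply: within_continuous_comp.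
      move=> z _.
      exact: (cont_of_der (is_deriveM (is_derive_id z (1:R)) (is_derive_cst (q k)^-1 z 1))).
    apply: continuous_subspaceW (xcont k).
    by apply: subset_itvl; rewrite bnd_simp.
  have xtd : forall t, 0 < t < s -> forall k,
      is_derive t 1 (fun u => xt u k) (Fdelay P (fun s' => xt (t + s')) k).
    move=> t /andP[t0 ts] k.
    have tT : 0 < t < T by apply/andP; split; lra.
    have D := xder t tT k.
    pose psi := fun s' => xt (t + s').
    have pci : pos_cont_init tau psi.
      split.
        move=> s' /andP[h1 h2] j; apply: xtp; apply/andP; split; lra.
      move=> j; apply: ed_wcont => s' hs' e ep.
      have tsin : `[-tau, s]%classic (t + s').
        move: hs'; rewrite /= !in_itv /= => /andP[h1 h2]; apply/andP; split; lra.
      have [d dp' Hd] := wcont_ed (xtc j) tsin ep.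
      exists d => // y hy yd.
      have tyin : `[-tau, s]%classic (t + y).
        move: hy; rewrite /= !in_itv /= => /andP[h1 h2]; apply/andP; split; lra.
      apply: (Hd _ tyin).
      by rewrite opprD addrACA subrr add0r.
    have LC := lcj.2 psi pci k.
    have E : (fun s' j => q j * psi s' j) = (fun s' => x (t + s')).
      by apply: funext => s'; apply: funext => j; rewrite /psi qxt.
    rewrite E in LC.
    have D2 := is_deriveZ (q k)^-1 D.
    have -> : Fdelay P (fun s' => xt (t + s')) k =
              (q k)^-1 *: Fdelay S (fun s' => x (t + s')) k.
      by rewrite LC /GRing.scale /= mulKf //; exact: lt0r_neq0.
    have -> : (fun u => xt u k) = (q k)^-1 \*: (fun u => x u k).
      by apply: funext => u; rewrite /xt mulrC.
    exact: D2.
  have Mb : forall i u, -tau <= u <= 0 ->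
      phiL (dotv (col i (ycomp P)) (fun j => ln (c j)))
           (dotv (col i (ycomp P)) (fun j => ln (xt u j))) <= be.
    by move=> i u hu; have [_ H] := UBu u hu; exact: H.
  have Hcore := core kp dp dP tau0 cp CB spos xtp xtc xtd Mb.
  have h0in : -tau <= (0:R) <= 0 by apply/andP; split; lra.
  have H0 : \sum_k hf (c k) (xt 0 k) <= n%:R * be.
    have [H _] := UBu 0 h0in.
    apply: (le_trans (ler_sum _ (fun k _ => H k))).
    by rewrite sumr_const card_ord mulr_natl.
  have Kbe : K * be < al.
    rewrite /be mulrA ltr_pdivrMr ?ltr_pwDr // mulrC ltr_pM2l //; lra.
  have Hs : \sum_k hf (c k) (xt s k) < al.
    apply: (le_lt_trans Hcore); apply: (le_lt_trans _ Kbe).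
    rewrite /K mulrDl lerD // mulr_suml; apply: ler_sum => i _.
    by rewrite mulrA.
  have sin : -tau <= s <= s by apply/andP; split; lra.
  move=> k; rewrite ltNge; apply/negP => Hk.
  have := LB k (xt s k) (xtp s sin k); rewrite qxt qc => /(_ Hk) Hal.
  have : hf (c k) (xt s k) <= \sum_k hf (c k) (xt s k).
    rewrite (bigD1 k) //= lerDl sumr_ge0 // => j _.
    by apply: hf_ge0 => //; apply: xtp.
  lra.
have ALL : forall t, 0 <= t < T -> good t.
  move=> t1 /andP[t10 t1T].
  case: (pselect (good t1)) => // ngt1; exfalso.
  pose A := [set u | 0 <= u <= t1 /\ ~ good u].
  have At1 : A t1 by split => //; rewrite t10 lexx.
  have A0 : A !=set0 by exists t1.
  have Alb : has_lbound A by exists 0 => u [/andP[]].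
  pose s := inf A.
  have s0 : 0 <= s by apply: lb_le_inf => // u [/andP[]].
  have st1 : s <= t1 by move: (ge_inf Alb) => /(_ t1 At1).
  have below : forall u, 0 <= u < s -> good u.
    move=> u /andP[u0 us]; case: (pselect (good u)) => // ngu.
    have : s <= u.
      by move: (ge_inf Alb) => /(_ u); apply; split => //; rewrite u0 /=; lra.
    lra.
  have gs : good s by apply: KEY => //; apply/andP; split => //; lra.
  have [r rp Hr] : exists2 r, 0 < r & forall u, -tau <= u < T -> `|u - s| < r -> good u.
    have ek : forall k, 0 < e1 - `|x s k - xs k| by move=> k; rewrite subr_gt0.
    have sin : `[-tau, T[%classic s by rewrite /= in_itv /=; apply/andP; split; lra.
    have [d Hd] := boolp.choice (fun k => ex2_ex (wcont_ed (xcont k) sin (ek k))).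
    have dp' : forall k, 0 < d k by move=> k; have [] := Hd k.
    have [r rp rle] := exists_small dp'.
    exists r => // u uin us k.
    have [_ H] := Hd k.
    have := H u (uin : `[-tau, T[%classic u) (lt_le_trans us (rle k)).
    have := ler_distD (x s k) (x u k) (xs k).
    move=> h1 h2; apply: (le_lt_trans h1).
    by rewrite -ltrBrDr.
  have [a Aa asr] := inf_adherent rp (conj A0 Alb).
  have sa : s <= a by move: (ge_inf Alb) => /(_ a Aa).
  case: Aa => /andP[a0 at1]; apply.
  apply: Hr; first by apply/andP; split; lra.
  by rewrite ger0_norm ?subr_ge0 // -/s; lra.
move=> t /andP[t0 tT] s /andP[s1 s2] k.
have [h|h] := lerP 0 (t + s).
  apply: (lt_le_trans _ e1eps); apply: ALL.
  by apply/andP; split; lra.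
apply: (lt_le_trans _ e1eps); apply: (lt_le_trans _ dee1); apply: init_good.
by apply/andP; split; lra.
Qed.
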